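(* Let $P\subset\mathbb R_+^n$ be a nonempty $n$-dimensional polyhedron with $P+\mathbb R_+^n\subset P$, $\Sigma$ a simplicial subdivision of the fan $\Sigma_0$ associated with $P$, $\sigma\in\Sigma^{(n)}$ with skeleton $a^1(\sigma),\dots,a^n(\sigma)$, $I\subset\{1,\dots,n\}$, and $\gamma=\gamma(I,\sigma)$ (assumed nonempty). Then the following are equivalent: (i) $\gamma$ is compact; (ii) $\sum_{j\in I}a^j_k(\sigma)>0$ for every $k=1,\dots,n$; (iii) $V(\gamma)=\emptyset$; (iv) $\pi(\sigma)(T_I(\mathbb R^n))=\{0\}$; (v) $\pi(\sigma)(T_I^*(\mathbb R^n))=\{0\}$.
   Context: $H(a,l)=\{x:\langle a,x\rangle=l\}$, $H^+(a,l)=\{x:\langle a,x\rangle\ge l\}$; polyhedron: finite intersection of $H^+(a,l)$ with $(a,l)\in\mathbb Z^n\times\mathbb Z$; faces are $P\cap H(a,l)$ with $P\subset H^+(a,l)$. $l(a)=\min\{\langle a,\alpha\rangle:\alpha\in P\}$. For each face $\gamma$, $\gamma^*=\{a\in\mathbb R_+^n:H(a,l(a))\cap P=\gamma\}$; closures of the $\gamma^*$ form the fan $\Sigma_0$. A simplicial subdivision $\Sigma$: fan with support $\mathbb R_+^n$, each cone inside a cone of $\Sigma_0$, each cone's skeleton (primitive integer edge vectors) completable to a basis of $\mathbb Z^n$; $\Sigma^{(n)}$ its $n$-dimensional cones. $\gamma(I,\sigma)=\bigcap_{j\in I}H(a^j(\sigma),l(a^j(\sigma)))\cap P$, with $\gamma(\emptyset,\sigma)=P$.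 $V(\gamma)=\{k:\gamma+\mathbb R_+e_k\subset\gamma\}$ ($e_k$ standard basis vector). $\pi(\sigma)(y)=x$ with $x_k=\prod_jy_j^{a^j_k(\sigma)}$. $T_I(\mathbb R^n)=\{y:y_j=0\text{ for }j\in I\}$, $T_I^*(\mathbb R^n)=\{y:y_j=0\iff j\in I\}$. *)

(* Defs.v *)
From Stdlib Require Import Reals ZArith ClassicalEpsilon.
From mathcomp Require Import all_boot.
Set Implicit Arguments. Unset Strict Implicit. Unset Printing Implicit Defensive.

Open Scope R_scope.

Definition rvec (n : nat) := 'I_n -> R.
Definition zvec (n : nat) := 'I_n -> Z.
Definition rset (n : nat) := rvec n -> Prop.

Definition zr {n} (a : zvec n) : rvec n := fun k => IZR (a k).

Definition seteq {n} (S T : rset n) : Prop := forall x, S x <-> T x.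
Definition rsubset {n} (S T : rset n) : Prop := forall x, S x -> T x.

Definition dot {n} (a x : rvec n) : R := \big[Rplus/0]_(k < n) (a k * x k).

Definition Hyp {n} (a : rvec n) (l : R) : rset n := fun x => dot a x = l.
Definition Hplus {n} (a : rvec n) (l : R) : rset n := fun x => dot a x >= l.

Definition nonneg_orthant n : rset n := fun x => forall k, 0 <= x k.

Definition polyhedron {n} (cs : list (zvec n * Z)) : rset n :=
  fun x => forall c, List.In c cs -> Hplus (zr c.1) (IZR c.2) x.

Definition full_dim {n} (P : rset n) : Prop :=
  exists (x0 : rvec n) (xs : 'I_n -> rvec n),
    P x0 /\ (forall i, P (xs i)) /\
    (forall c : 'I_n -> R,
        (forall k, \big[Rplus/0]_(i < n) (c i * (xs i k - x0 k)) = 0) ->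
        forall i, c i = 0).

Definition orthant_stable {n} (P : rset n) : Prop :=
  forall x y, P x -> nonneg_orthant y -> P (fun k => x k + y k).

Definition face {n} (P : rset n) (g : rset n) : Prop :=
  exists (a : rvec n) (l : R),
    rsubset P (Hplus a l) /\ seteq g (fun x => P x /\ Hyp a l x).

Definition is_min_value {n} (P : rset n) (a : rvec n) (m : R) : Prop :=
  (exists al, P al /\ dot a al = m) /\ (forall al, P al -> m <= dot a al).

Definition lval {n} (P : rset n) (a : rvec n) : R :=
  epsilon (inhabits 0) (is_min_value P a).

Definition supp_face {n} (P : rset n) (a : rvec n) : rset n :=
  fun x => Hyp a (lval P a) x /\ P x.

Definition gstar {n} (P : rset n) (g : rset n) : rset n :=
  fun a => nonneg_orthant a /\ seteq (supp_face P a) g.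

Definition rclosure {n} (S : rset n) : rset n :=
  fun x => forall eps, 0 < eps -> exists y, S y /\ forall k, Rabs (x k - y k) < eps.

Definition cone_of_Sigma0 {n} (P : rset n) (C : rset n) : Prop :=
  exists g, face P g /\ seteq C (rclosure (gstar P g)).

(* cones are represented by their skeleton: a list of integer vectors *)
Definition zvec0 {n} : zvec n := fun _ => 0%Z.

Definition rcone {n} (s : list (zvec n)) : rset n :=
  fun x => exists c : nat -> R, (forall i, 0 <= c i) /\
    forall k, x k = \big[Rplus/0]_(i < size s) (c i * IZR (nth zvec0 s i k)).

Definition cone_face {n} (C : rset n) (F : rset n) : Prop :=
  exists a : rvec n, rsubset C (Hplus a 0) /\ seteq F (fun x => C x /\ Hyp a 0 x).

Definition is_fan {n} (Sig : list (list (zvec n))) : Prop :=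
  (forall s, List.In s Sig -> forall F, cone_face (rcone s) F ->
      exists s', List.In s' Sig /\ seteq (rcone s') F) /\
  (forall s s', List.In s Sig -> List.In s' Sig ->
      cone_face (rcone s) (fun x => rcone s x /\ rcone s' x) /\
      cone_face (rcone s') (fun x => rcone s x /\ rcone s' x)).

Definition primitive {n} (v : zvec n) : Prop :=
  (exists k, v k <> 0%Z) /\
  forall (m : Z) (w : zvec n), (forall k, v k = (m * w k)%Z) -> m = 1%Z \/ m = (-1)%Z.

Definition zcomb {n} (s : list (zvec n)) (c : nat -> Z) : zvec n :=
  fun k => \big[Z.add/0%Z]_(i < size s) (c i * nth zvec0 s i k)%Z.

Definition Zbasis {n} (s : list (zvec n)) : Prop :=
  (forall v : zvec n, exists c, forall k, v k = zcomb s c k) /\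
  (forall c, (forall k, zcomb s c k = 0%Z) -> forall i, (i < size s)%N -> c i = 0%Z).

Definition simplicial_subdivision {n} (P : rset n) (Sig : list (list (zvec n))) : Prop :=
  is_fan Sig /\
  (forall x, nonneg_orthant x <-> exists s, List.In s Sig /\ rcone s x) /\
  (forall s, List.In s Sig -> exists C, cone_of_Sigma0 P C /\ rsubset (rcone s) C) /\
  (forall s, List.In s Sig -> (forall v, List.In v s -> primitive v) /\
                              exists t, Zbasis (s ++ t)).

Definition skel {n} (s : list (zvec n)) (j : 'I_n) : zvec n := nth zvec0 s j.

Definition gammaI {n} (P : rset n) (s : list (zvec n)) (I : {set 'I_n}) : rset n :=
  fun x => (forall j, j \in I -> Hyp (zr (skel s j)) (lval P (zr (skel s j))) x) /\ P x.

Definition Vset {n} (g : rset n) (k : 'I_n) : Prop :=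
  forall x t, g x -> 0 <= t -> g (fun i => x i + (if i == k then t else 0)).

Definition pimap {n} (s : list (zvec n)) (y : rvec n) : rvec n :=
  fun k => \big[Rmult/1]_(j < n) powerRZ (y j) (skel s j k).

Definition TI {n} (I : {set 'I_n}) : rset n := fun y => forall j, j \in I -> y j = 0.
Definition TIstar {n} (I : {set 'I_n}) : rset n := fun y => forall j, y j = 0 <-> j \in I.

Definition rimage {n} (f : rvec n -> rvec n) (S : rset n) : rset n :=
  fun x => exists y, S y /\ f y = x.

Definition zero_set {n} : rset n := fun x => forall k, x k = 0.

Definition is_open {n} (U : rset n) : Prop :=
  forall x, U x -> exists eps, 0 < eps /\
    forall y, (forall k, Rabs (y k - x k) < eps) -> U y.

Definition rcompact {n} (S : rset n) : Prop :=
  forall (Idx : Type) (U : Idx -> rset n),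
    (forall i, is_open (U i)) -> (forall x, S x -> exists i, U i x) ->
    exists l : list Idx, forall x, S x -> exists i, List.In i l /\ U i x.

(* Main.v *)
Require Import Defs.
From Stdlib Require Import Reals ZArith Lra Lia Classical FunctionalExtensionality.
From mathcomp Require Import all_boot.
From HB Require Import structures.
Open Scope R_scope.

Module HBorel.
From mathcomp Require Import all_order all_algebra all_classical all_reals all_analysis Rstruct Rstruct_topology.
Import Order.TTheory GRing.Theory Num.Theory.
Import ArrowAsProduct.
Local Open Scope classical_set_scope.
From HB Require Import structures.
HB.instance Definition _ (n : nat) := isPointed.Build ('I_n -> R) (fun _ => 0%R).

Lemma our_open n (U : rset n) : is_open U -> open (U : set ('I_n -> R)).
Proof.
move=> oU; rewrite openE => x Ux; have [eps [eps0 H]] := oU x Ux.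
rewrite /interior.
have : \forall y \near x, forall k : 'I_n, Rabs (y k - x k) < eps.
  apply: (@filter_forall _ _ (fun k (y : 'I_n -> R) => Rabs (y k - x k) < eps) (nbhs x)) => k.
  have hb : nbhs (x k) (ball (x k) eps) by apply: nbhsx_ballx; exact/RltP.
  have P := @proj_continuous 'I_n (fun _ => R) k x _ hb.
  apply: (@filterS _ _ _ (proj k @^-1` ball (x k) eps)) => // y /=.
  move=> Hb; move: Hb; rewrite /ball /= /proj RabsE RminusE => h; apply/RltP; by rewrite distrC.
move=> Hn. exact: (@filterS _ (nbhs x) _ _ U H Hn).
Qed.

Lemma In_of_mem (T : eqType) (x : T) (s : seq T) : x \in s -> List.In x s.
Proof. elim: s => //= a s IH; rewrite in_cons => /orP [/eqP ->|/IH]; tauto. Qed.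

Lemma pick_idx (T Idx : Type) (U : Idx -> T) (l : list T) :
  (forall S, List.In S l -> exists i, U i = S) ->
  exists li : list Idx, forall S, List.In S l -> exists i, List.In i li /\ U i = S.
Proof.
elim: l => [|a l IH] H; first by exists nil.
have [|li Hli] := IH; first by move=> S HS; apply: H; right.
have [i Hi] := H a (or_introl erefl).
exists (i :: li) => S [<-|HS]; first by exists i; split => //; left.
by have [j [Hj1 Hj2]] := Hli S HS; exists j; split => //; right.
Qed.

Lemma heine_borel n (K : rset n) (lo hi : 'I_n -> R) :
  (forall x, K x -> forall k, lo k <= x k <= hi k) ->
  is_open (fun x => ~ K x) -> rcompact K.
Proof.
move=> Hb Ho.
have cK : compact (K : set ('I_n -> R)).
  apply: (@subclosed_compact _ _ _ _ (@tychonoff 'I_n (fun _ => R) (fun k => `[lo k, hi k]) _)).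
  - have := open_closedC (@our_open n (fun x => ~ K x) Ho).
    by rewrite -[X in closed X]/(~` ~` (K : set ('I_n -> R))) setCK.
  - by move=> k; apply: segment_compact.
  - move=> x Kx k /=; have [h1 h2] := Hb x Kx k.
    by rewrite in_itv /=; apply/andP; split; apply/RleP.
have {}cK : cover_compact (K : set ('I_n -> R)) by rewrite -(@compact_cover ('I_n -> R)).
move=> Idx U HU Hcov.
have o1 : forall S : set ('I_n -> R), [set S | exists i, U i = S] S -> open (id S).
  by move=> S [i <-]; apply: our_open.
have o2 : (K : set ('I_n -> R)) `<=` cover [set S | exists i, U i = S] id.
  by move=> x /Hcov [i Hi]; exists (U i) => //; exists i.
have [D' sD Dcov] := cK (set ('I_n -> R)) [set S | exists i, U i = S] id o1 o2.
have [|li Hli] := @pick_idx _ Idx U (finmap.enum_fset D'); last first.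
  exists li => x Kx.
  have [S HS Sx] := Dcov x Kx.
  have [i [Hi1 Hi2]] := Hli S (@In_of_mem _ _ _ HS).
  by exists i; split => //; rewrite Hi2.
move=> S HS.
have HS' : (S : set ('I_n -> R)) \in finmap.enum_fset D'.
  move: HS; elim: (finmap.enum_fset D') => //= a l IH [->|/IH].
    by rewrite in_cons eqxx.
  by rewrite in_cons => ->; rewrite orbT.
by have := sD S HS'; rewrite inE.
Qed.
End HBorel.


Lemma Rplus_A : associative Rplus. Proof. by move=> *; rewrite Rplus_assoc. Qed.
Lemma Rplus_C : commutative Rplus. Proof. exact: Rplus_comm. Qed.
Lemma Rplus_0L : left_id 0 Rplus. Proof. exact: Rplus_0_l. Qed.
HB.instance Definition _ := Monoid.isComLaw.Build R 0 Rplus Rplus_A Rplus_C Rplus_0L.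
Lemma Rmult_A : associative Rmult. Proof. by move=> *; rewrite Rmult_assoc. Qed.
Lemma Rmult_C : commutative Rmult. Proof. exact: Rmult_comm. Qed.
Lemma Rmult_1L : left_id 1 Rmult. Proof. exact: Rmult_1_l. Qed.
HB.instance Definition _ := Monoid.isComLaw.Build R 1 Rmult Rmult_A Rmult_C Rmult_1L.
Lemma Zadd_A : associative Z.add. Proof. by move=> *; rewrite Z.add_assoc. Qed.
Lemma Zadd_0L : left_id 0%Z Z.add. Proof. exact: Z.add_0_l. Qed.
HB.instance Definition _ := Monoid.isComLaw.Build Z 0%Z Z.add Zadd_A Z.add_comm Zadd_0L.

Section Aux.
Variable n : nat.

Lemma Rsum_nonneg (F : 'I_n -> R) (Q : pred 'I_n) : (forall i, 0 <= F i) ->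
  0 <= \big[Rplus/0]_(i | Q i) F i.
Proof. move=> H; apply: (big_ind (fun x => 0 <= x)) => //; [lra| move=> *; lra]. Qed.

Lemma Rsum_ge_term (F : 'I_n -> R) k : (forall i, 0 <= F i) ->
  F k <= \big[Rplus/0]_(i < n) F i.
Proof.
move=> H; rewrite (bigD1 k) //=.
match goal with |- _ <= Rplus _ ?B => have : 0 <= B by apply: Rsum_nonneg end. lra.
Qed.

Lemma dot_shift (a x : rvec n) k t :
  dot a (fun i => x i + (if i == k then t else 0)) = dot a x + a k * t.
Proof.
rewrite /dot (bigD1 k) //= [in RHS](bigD1 k) //= eqxx.
have -> : \big[Rplus/0]_(i < n | i != k) (a i * (x i + (if i == k then t else 0)))
   = \big[Rplus/0]_(i < n | i != k) (a i * x i).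
  by apply: eq_bigr => i /negbTE ->; rewrite Rplus_0_r.
set B := \big[Rplus/0]_(i < n | i != k) (a i * x i). rewrite Rmult_plus_distr_l; lra.
Qed.

Lemma dot_cont (a x : rvec n) d : 0 < d -> exists eps, 0 < eps /\
  forall y : rvec n, (forall k, Rabs (y k - x k) < eps) -> Rabs (dot a y - dot a x) < d.
Proof.
move=> d0.
set S := \big[Rplus/0]_(k < n) Rabs (a k).
have S0 : 0 <= S by apply: Rsum_nonneg => i; apply: Rabs_pos.
exists (d / (S + 1)); split; first by apply: Rdiv_lt_0_compat; lra.
move=> y Hy.
have H : Rabs (dot a y - dot a x) <= S * (d / (S + 1)).
  rewrite /dot /S.
  apply: (big_ind3 (fun u v w => Rabs (u - v) <= w * (d / (S + 1)))).
  - rewrite Rminus_0_r Rabs_R0; lra.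
  - move=> x1 x2 x3 y1 y2 y3 h1 h2.
    have -> : x1 + y1 - (x2 + y2) = (x1 - x2) + (y1 - y2) by ring.
    apply: Rle_trans; first by apply: Rabs_triang.
    lra.
  - move=> i _.
    have -> : a i * y i - a i * x i = a i * (y i - x i) by ring.
    rewrite Rabs_mult; apply: Rmult_le_compat_l; first exact: Rabs_pos.
    by apply: Rlt_le; apply: Hy.
apply: Rle_lt_trans; first exact: H.
have -> : S * (d / (S + 1)) = d - d / (S + 1) by field; lra.
have : 0 < d / (S + 1) by apply: Rdiv_lt_0_compat; lra.
lra.
Qed.

End Aux.

Definition heine_borel := HBorel.heine_borel.

Section Main.
Variable n : nat.

Lemma skel_nonneg (P : rset n) (Sig : list (list (zvec n))) (s : list (zvec n)) :
  simplicial_subdivision P Sig -> List.In s Sig -> size s = n ->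
  forall j k, (0 <= skel s j k)%Z.
Proof.
move=> [_ [Hsupp _]] Hs Hsz j k.
have : nonneg_orthant (zr (skel s j)).
  apply/Hsupp; exists s; split => //.
  exists (fun i => if i == nat_of_ord j then 1 else 0); split.
    by move=> i; case: (_ == _); lra.
  move=> k'; rewrite Hsz (bigD1 j) //= eqxx Rmult_1_l.
  rewrite big1 ?Rplus_0_r //.
  by move=> i /negbTE; rewrite -val_eqE /= => ->; rewrite Rmult_0_l.
by move=> /(_ k); rewrite /zr; apply: le_IZR.
Qed.

Lemma Zsum_pos (a : 'I_n -> Z) (I : {set 'I_n}) : (forall j, (0 <= a j)%Z) ->
  ((\big[Z.add/0%Z]_(j < n | j \in I) a j > 0)%Z <-> exists j, j \in I /\ (a j > 0)%Z).
Proof.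
move=> H; split.
  move=> Hs; apply: NNPP => Hn.
  have : (\big[Z.add/0%Z]_(j < n | j \in I) a j = 0)%Z.
    apply: big1 => j jI; have := H j.
    have : ~ (a j > 0)%Z by move=> h; apply: Hn; exists j.
    lia.
  lia.
move=> [j [jI aj]]; rewrite (bigD1 j) //=.
match goal with |- (Z.add _ ?B > 0)%Z =>
  have : (0 <= B)%Z by apply: (big_ind (fun x => 0 <= x)%Z) => //; lia end.
lia.
Qed.


Lemma In_le_sum (l : list nat) i : List.In i l -> (i <= List.list_sum l)%coq_nat.
Proof. elim: l => //= a l IH [->|/IH]; lia. Qed.

End Main.

Theorem proposition8p6 (n : nat) (cs : list (zvec n * Z))
  (Sig : list (list (zvec n))) (s : list (zvec n)) (I : {set 'I_n}) :
  let P := polyhedron cs in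
  (exists x, P x) ->
  full_dim P ->
  rsubset P (@nonneg_orthant n) ->
  orthant_stable P ->
  simplicial_subdivision P Sig ->
  List.In s Sig -> size s = n ->
  (exists x, gammaI P s I x) ->
  let g := gammaI P s I in
  (rcompact g <->
     (forall k : 'I_n, (\big[Z.add/0%Z]_(j < n | j \in I) skel s j k > 0)%Z)) /\
  (rcompact g <-> (forall k : 'I_n, ~ Vset g k)) /\
  (rcompact g <-> seteq (rimage (pimap s) (TI I)) zero_set) /\
  (rcompact g <-> seteq (rimage (pimap s) (TIstar I)) zero_set).
Proof.
move=> P _ _ HPo Hst Hss Hs Hsz Hgne g.
have Hnn := @skel_nonneg n P Sig s Hss Hs Hsz.
set A := forall k : 'I_n, (\big[Z.add/0%Z]_(j < n | j \in I) skel s j k > 0)%Z.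
have hA : forall k, (\big[Z.add/0%Z]_(j < n | j \in I) skel s j k > 0)%Z <->
    exists j, j \in I /\ (skel s j k > 0)%Z.
  by move=> k; apply: (@Zsum_pos n (fun j => skel s j k) I (fun j => Hnn j k)).
have notA : ~ A -> exists k, forall j, j \in I -> skel s j k = 0%Z.
  move=> nA; apply: NNPP => h; apply: nA => k; apply/hA.
  apply: NNPP => h2; apply: h; exists k => j jI.
  have := Hnn j k; have : ~ (skel s j k > 0)%Z by move=> h3; apply: h2; exists j.
  lia.
have V0 : forall k, (forall j, j \in I -> skel s j k = 0%Z) -> Vset g k.
  move=> k H0 x t [Hx Px] t0; split.
    move=> j jI; rewrite /Hyp dot_shift.
    have -> : zr (skel s j) k = 0 by rewrite /zr H0.
    rewrite Rmult_0_l Rplus_0_r; exact: Hx.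
  apply: (Hst x (fun i => if i == k then t else 0)) => // i.
  by case: (_ == _); lra.
have NC : forall k, Vset g k -> ~ rcompact g.
  move=> k HV Hc; have [x0 gx0] := Hgne.
  have [] := Hc nat (fun m y => y k < INR m).
  - move=> m y Hy; exists (INR m - y k); split; first lra.
    by move=> z /(_ k) /Rabs_def2; lra.
  - move=> y _; have [m Hm] := INR_archimed 1 (y k) Rlt_0_1.
    by exists m; lra.
  move=> l Hl.
  have t0 : 0 <= Rabs (x0 k) + INR (List.list_sum l).
    have := Rabs_pos (x0 k); have := pos_INR (List.list_sum l); lra.
  have [i [Hin Hi]] := Hl _ (HV x0 _ gx0 t0).
  move: Hi; rewrite eqxx => Hi.
  have := le_INR _ _ (@In_le_sum _ _ Hin).
  have := HPo x0 gx0.2 k; have := Rabs_pos (x0 k); lra.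
have hj : A -> forall k, exists j, j \in I /\ (skel s j k > 0)%Z.
  by move=> HA k; apply/hA.
have CA : A -> rcompact g.
  move=> HA; have hj' := hj HA.
  apply: (@heine_borel n g (fun _ => 0)
     (fun _ => \big[Rplus/0]_(j < n) Rabs (lval P (zr (skel s j))))).
  - move=> x [Hx Px] k; have [j [jI aj]] := hj' k.
    have xk0 := HPo x Px.
    split; first exact: xk0.
    have H1 : zr (skel s j) k * x k <= dot (zr (skel s j)) x.
      apply: (@Rsum_ge_term n (fun i => zr (skel s j) i * x i) k) => i.
      apply: Rmult_le_pos; [apply: IZR_le; exact: Hnn| exact: xk0].
    have H2 : 1 <= zr (skel s j) k by rewrite /zr; apply: IZR_le; lia.
    have H3 := @Rsum_ge_term n (fun j => Rabs (lval P (zr (skel s j)))) j (fun i => Rabs_pos _).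
    have H4 := Rle_abs (lval P (zr (skel s j))).
    rewrite /Hyp in Hx; rewrite (Hx j jI) in H1.
    have := xk0 k; simpl in H3. set B := \big[Rplus/0]_(j < n) Rabs (lval P (zr (skel s j))) in H3 *. nra.
  - move=> x Hx.
    case: (classic (P x)) => HPx.
    + have [j [jI Hj]] : exists j, j \in I /\ dot (zr (skel s j)) x <> lval P (zr (skel s j)).
        apply: NNPP => Hn; apply: Hx; split => // j jI; apply: NNPP => h; apply: Hn.
        by exists j.
      have d0 : 0 < Rabs (dot (zr (skel s j)) x - lval P (zr (skel s j))).
        by apply: Rabs_pos_lt; lra.
      have [eps [e0 He]] := @dot_cont n (zr (skel s j)) x _ d0.
      exists eps; split => // y Hy [Hy1 _].
      have := He y Hy; rewrite (Hy1 j jI) Rabs_minus_sym; lra.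
    + have [c [Hc Hc2]] : exists c, List.In c cs /\ ~ Hplus (zr c.1) (IZR c.2) x.
        apply: NNPP => Hn; apply: HPx => c Hc; apply: NNPP => h; apply: Hn.
        by exists c.
      have Hlt := Rnot_ge_lt _ _ Hc2.
      have d0 : 0 < IZR c.2 - dot (zr c.1) x by lra.
      have [eps [e0 He]] := @dot_cont n (zr c.1) x _ d0.
      exists eps; split => // y Hy [_ Py].
      have := He y Hy; move/Rabs_def2 => [h1 h2].
      have := Py c Hc; rewrite /Hplus; lra.
have iii : A -> forall k, ~ Vset g k.
  move=> HA k HV; have [x gx] := Hgne.
  have g1 := HV x 1 gx Rle_0_1.
  have [j [jI aj]] := hj HA k.
  have E1 := gx.1 j jI; have E2 := g1.1 j jI.
  rewrite /Hyp (@dot_shift n) in E2; rewrite /Hyp in E1.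
  have := IZR_lt 0 _ (Z.gt_lt _ _ aj); rewrite /zr in E2 E1; lra.
pose y0 := fun j : 'I_n => if j \in I then 0 else 1.
have pim_zero : A -> forall y, TI I y -> forall k, pimap s y k = 0.
  move=> HA y Hy k; have [j [jI aj]] := hj HA k.
  rewrite /pimap (bigD1 j) //= (Hy j jI).
  case E: (skel s j k) aj => [|p|p] aj; try lia.
  by rewrite /= pow_i ?Rmult_0_l //; apply: Pos2Nat.is_pos.
have pim_one : forall k, (forall j, j \in I -> skel s j k = 0%Z) -> pimap s y0 k = 1.
  move=> k H0; rewrite /pimap big1 // => j _; rewrite /y0.
  case: ifP => jI; first by rewrite H0.
  exact: powerRZ_R1.
have PIM : forall T' : rset n, T' y0 -> (forall y, T' y -> TI I y) ->
    (seteq (rimage (pimap s) T') zero_set <-> A).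
  move=> T' Ty0 TT; split.
    move=> Hse; apply: NNPP => nA; have [k Hk] := notA nA.
    have := (Hse (pimap s y0)).1 (ex_intro _ y0 (conj Ty0 erefl)) k.
    rewrite pim_one //; exact: R1_neq_R0.
  move=> HA x; split.
    by move=> [y [Ty <-]] k; apply: pim_zero => //; apply: TT.
  move=> Hz; exists y0; split => //; apply: functional_extensionality => k.
  by rewrite Hz; apply: pim_zero => //; apply: TT.
have TIy0 : TI I y0 by move=> j jI; rewrite /y0 jI.
have TISy0 : TIstar I y0.
  move=> j; rewrite /y0; case: ifP => h; split => //.
  by move/R1_neq_R0.
have CA' : rcompact g <-> A.
  split; last exact: CA.
  move=> Hc; apply: NNPP => nA; have [k Hk] := notA nA.
  exact: (NC k (V0 k Hk) Hc).
have VA : (forall k, ~ Vset g k) <-> A.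
  split; last exact: iii.
  move=> HV; apply: NNPP => nA; have [k Hk] := notA nA.
  exact: (HV k (V0 k Hk)).
split; first exact: CA'.
split; first exact: iff_trans CA' (iff_sym VA).
split; first exact: iff_trans CA' (iff_sym (PIM _ TIy0 (fun y h => h))).
apply: iff_trans CA' (iff_sym (PIM _ TISy0 _)).
by move=> y Hy j jI; apply/Hy.
Qed.
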